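(* Let $G$ be any simple graph on $n$ vertices with chromatic number $k=\chi(G)$. Then $$\varepsilon(G)\ge\frac{n!}{k^{\,n-k}\,k!}.$$
   Context: For an undirected simple graph $G=(V,E)$, $\varepsilon(G)$ denotes the maximum, over all acyclic orientations of $E$, of the number of linear extensions of the partial order induced on $V$ (where $u<v$ iff there is a directed path from $u$ to $v$; a linear extension of a poset on an $n$-element set is an order-preserving bijection onto $[n]$). *)

(* Defs.v *)
From HB Require Import structures.
From mathcomp Require Import all_boot all_order all_algebra.
Set Implicit Arguments. Unset Strict Implicit. Unset Printing Implicit Defensive.

Definition simple_graph (T : finType) (e : rel T) : Prop :=
  symmetric e /\ irreflexive e.

Definition colorable (T : finType) (e : rel T) (k : nat) : Prop :=
  exists c : T -> 'I_k, forall x y, e x y -> c x != c y.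

Definition chromatic_number (T : finType) (e : rel T) (k : nat) : Prop :=
  colorable e k /\ forall j, j < k -> ~ colorable e j.

Definition orel (T : finType) (O : {set T * T}) : rel T := fun x y => (x, y) \in O.

Definition is_orientation (T : finType) (e : rel T) (O : {set T * T}) : bool :=
  [forall x, forall y,
     (orel O x y ==> e x y) && (e x y ==> (orel O x y (+) orel O y x))].

Definition acyclicb (T : finType) (O : {set T * T}) : bool :=
  [forall x, forall y, orel O x y ==> ~~ connect (orel O) y x].

Definition is_acyclic_orientation (T : finType) (e : rel T) (O : {set T * T}) : bool :=
  is_orientation e O && acyclicb O.

Definition induced_lt (T : finType) (O : {set T * T}) (u v : T) : bool :=
  (u != v) && connect (orel O) u v.

Definition linear_extensions (T : finType) (O : {set T * T}) :
    {set {ffun T -> 'I_#|T|}} :=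
  [set f : {ffun T -> 'I_#|T|} | injectiveb f &&
     [forall u, forall v, induced_lt O u v ==> (f u < f v)%N]].

Definition num_linext (T : finType) (O : {set T * T}) : nat :=
  #|linear_extensions O|.

Definition epsilon (T : finType) (e : rel T) : nat :=
  \max_(O : {set T * T} | is_acyclic_orientation e O) num_linext O.

(* Main.v *)
Require Import Defs.
From HB Require Import structures.
From mathcomp Require Import all_boot all_order all_algebra.
From mathcomp Require Import zify.
Import Order.TTheory GRing.Theory Num.Theory.
Set Implicit Arguments. Unset Strict Implicit.

Lemma binG k a : 'C(k + a, a) <= k.+1 ^ a.
Proof.
elim: a => [|a IH]; first by rewrite addn0 bin0.
have H := mul_bin_diag (k + a).+1 a.
rewrite /= -addnS in H.
have : a.+1 * 'C(k + a.+1, a.+1) <= a.+1 * k.+1 ^ a.+1.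
  rewrite -H expnS.
  have -> : a.+1 * (k.+1 * k.+1 ^ a) = ((a.+1 * k.+1) * k.+1 ^ a) by rewrite mulnA.
  apply: leq_mul => //; lia.
by rewrite leq_pmul2l.
Qed.

Lemma expn_mono k b : k ^ b <= k.+1 ^ b.
Proof. by case: b => // b; rewrite leq_exp2r. Qed.

Lemma binQ k a b : 'C(k + b + a, a) * k ^ b <= k.+1 ^ (b + a).
Proof.
elim: a b => [|a IHa] b.
  by rewrite bin0 mul1n addn0 expn_mono.
elim: b => [|b IHb].
  by rewrite addn0 expn0 muln1 add0n binG.
have E : k + b.+1 + a.+1 = (k + b + a.+1).+1 by lia.
rewrite E binS.
have E2 : k + b + a.+1 = k + b.+1 + a by lia.
have H2 := IHa b.+1.
rewrite -E2 in H2.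
move: IHb H2.
set X := 'C(k + b + a.+1, a.+1). set Y := 'C(k + b + a.+1, a).
have -> : b.+1 + a = b + a.+1 by lia.
have -> : b.+1 + a.+1 = (b + a.+1).+1 by lia.
set K := k.+1 ^ (b + a.+1).
rewrite expnS [k.+1 ^ _.+1]expnS -/K.
move=> H1 H2.
rewrite mulnDl.
have : X * (k * k ^ b) <= k * K.
  by rewrite mulnCA leq_mul2l H1 orbT.
lia.
Qed.

Lemma multi_bound (s : seq nat) : all (fun x => 0 < x) s ->
  (sumn s)`! <= (size s)`! * (size s) ^ (sumn s - size s) * \prod_(x <- s) x`!.
Proof.
elim: s => [|a t IH] /=; first by rewrite big_nil.
move=> /andP [a0 ht]; have H := IH ht.
have hm : size t <= sumn t.
  move: ht.
  elim: t {H IH} => [//|x t IH'] /= /andP[x0 h]; have := IH' h; lia.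
set m := sumn t in H hm *. set k := size t in H hm *.
set P := \prod_(x <- t) x`! in H *.
rewrite big_cons -/P.
have Hf := bin_fact (leq_addr m a).
rewrite addKn in Hf.
rewrite -Hf.
have Q := binQ k a (m - k).
have E0 : k + (m - k) + a = a + m by lia.
rewrite E0 in Q.
have -> : a + m - k.+1 = (m - k + a).-1 by lia.
rewrite factS.
have Ek : k.+1 * k`! * k.+1 ^ (m - k + a).-1 = k`! * k.+1 ^ (m - k + a).
  have -> : m - k + a = (m - k + a).-1.+1 by lia.
  by rewrite expnS /=; lia.
rewrite Ek.
move: Q H; set C := 'C(a + m, a); set E := k.+1 ^ (m - k + a); set B := k ^ (m - k).
move: (a`!) (m`!) (k`!) => A M K Q H.
apply: (@leq_trans (C * (A * (K * B * P)))).
  by rewrite leq_mul2l leq_mul2l H !orbT.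
have -> : C * (A * (K * B * P)) = (C * B) * (K * A * P).
  lia.
have -> : K * E * (A * P) = E * (K * A * P).
  lia.
by rewrite leq_mul2r Q orbT.
Qed.

Fixpoint allcat (T : eqType) (ls : seq (seq T)) : seq (seq T) :=
  if ls is l :: ls' then [seq p ++ q | p <- permutations l, q <- allcat ls']
  else [:: [::]].

Lemma size_allcat (T : eqType) (ls : seq (seq T)) : all uniq ls ->
  size (allcat ls) = \prod_(l <- ls) (size l)`!.
Proof.
elim: ls => [|l ls IH] /=; first by rewrite big_nil.
by move=> /andP[ul uls]; rewrite size_allpairs size_permutations // IH // big_cons.
Qed.

Lemma allcat_uniq (T : eqType) (ls : seq (seq T)) : uniq (allcat ls).
Proof.
elim: ls => [|l ls IH] //=.
apply: allpairs_uniq => //; first exact: permutations_uniq.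
move=> [p q] [p' q'] /allpairsP [[x y] [/= px _ [-> ->]]]
  /allpairsP [[x' y'] [/= px' _ [-> ->]]] /= /eqP.
rewrite eqseq_cat; last first.
  move: px px'; rewrite !mem_permutations => /perm_size -> /perm_size -> //.
by case/andP => /eqP -> /eqP ->.
Qed.

Lemma uniq_index_eq (T : eqType) (s1 s2 : seq T) : uniq s1 -> uniq s2 ->
  s1 =i s2 -> (forall x, index x s1 = index x s2) -> s1 = s2.
Proof.
move=> u1 u2 m12 hi.
have sz := perm_size (uniq_perm u1 u2 m12).
case: s1 u1 m12 hi sz => [|x0 s1'] u1 m12 hi sz.
  by case: s2 u2 m12 hi sz.
apply: (eq_from_nth (x0 := x0) sz) => i lti.
set y := nth x0 (x0 :: s1') i.
have yi : index y (x0 :: s1') = i by rewrite index_uniq.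
have ys2 : y \in s2 by rewrite -m12 mem_nth.
rewrite -[in RHS]yi hi nth_index //.
Qed.

Section Col.
Variables (T : finType) (k : nat) (c : T -> 'I_k).

Definition cls (i : nat) := [seq x <- enum T | c x == i :> nat].

Lemma allcat_prop a m L : L \in allcat (map cls (iota a m)) ->
  [/\ (forall x, (x \in L) = (a <= c x < a + m)), uniq L &
     forall u v, u \in L -> v \in L -> c u < c v -> index u L < index v L].
Proof.
elim: m a L => [|m IH] a L /=.
  rewrite inE => /eqP ->; split => // x; rewrite in_nil; apply/esym/negbTE; lia.
move=> /allpairsP [[p q] [/= pin qin ->]].
have [memq uq iq] := IH _ _ qin.
rewrite mem_permutations in pin.
have memp x : (x \in p) = (c x == a :> nat).
  by rewrite (perm_mem pin) mem_filter mem_enum andbT.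
split.
- move=> x; rewrite mem_cat memp memq.
  case: eqP => [->|h] /=; first by apply/esym; lia.
  apply/idP/idP; lia.
- rewrite cat_uniq uq (perm_uniq pin) filter_uniq ?enum_uniq //= andbT.
  apply/hasPn => x xq; rewrite memp; move: xq; rewrite memq; lia.
- move=> u v; rewrite !mem_cat !index_cat => uin vin cuv.
  case: ifP => up.
    have vp : (v \in p) = false by move: up; rewrite !memp; lia.
    rewrite vp; apply: (leq_trans (n := size p)); first by rewrite index_mem.
    exact: leq_addr.
  have uq' : u \in q by move: uin; rewrite up.
  have vp : (v \in p) = false.
    move: uq'; rewrite memq memp; lia.
  rewrite vp ltn_add2l; apply: iq => //.
  by move: vin; rewrite vp.
Qed.

End Col.

Section Graph.
Variables (T : finType) (e : rel T) (k : nat) (c : T -> 'I_k).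
Hypothesis esym : symmetric e.
Hypothesis proper : forall x y, e x y -> c x != c y.

Definition Oc : {set T * T} := [set p : T * T | e p.1 p.2 && (c p.1 < c p.2)].

Lemma orelOc x y : orel Oc x y = e x y && (c x < c y).
Proof. by rewrite /orel inE. Qed.

Lemma connect_col u v : connect (orel Oc) u v -> u = v \/ c u < c v.
Proof.
move/connectP => [p]; elim: p u => [|y p IH] u /=; first by move=> _ ->; left.
move=> /andP[uy py] hv; right.
move: uy; rewrite orelOc => /andP[_ h].
by case: (IH y py hv) => [<-|h2] //; apply: ltn_trans h2.
Qed.

Lemma Oc_acyclic : is_acyclic_orientation e Oc.
Proof.
apply/andP; split.
  apply/forallP => x; apply/forallP => y; rewrite !orelOc.
  apply/andP; split; first by apply/implyP => /andP[].
  apply/implyP => exy; rewrite exy -esym exy /=.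
  have := proper exy; rewrite -val_eqE /=; move: (c x : nat) (c y : nat) => a b.
  by case: (ltngtP a b).
apply/forallP => x; apply/forallP => y; apply/implyP; rewrite orelOc => /andP[exy lt].
apply/negP => /connect_col [eyx|lt2].
  by move: (proper exy); rewrite eyx eqxx.
by move: (ltn_trans lt lt2); rewrite ltnn.
Qed.

Definition fL (L : seq T) : {ffun T -> 'I_#|T|} :=
  [ffun x => insubd (enum_rank x) (index x L)].

Let ls := map (cls c) (iota 0 k).

Lemma allcat_full L : L \in allcat ls ->
  [/\ forall x, x \in L, uniq L, size L = #|T| &
     forall u v, c u < c v -> index u L < index v L].
Proof.
move=> /allcat_prop [mem uL io].
have memL x : x \in L by rewrite mem add0n ltn_ord.
have sz : size L = #|T|.
  rewrite cardE; apply: perm_size; apply: uniq_perm => //; first exact: enum_uniq.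
  by move=> x; rewrite mem_enum memL.
by split => // u v; apply: io.
Qed.

Lemma fL_val L x : L \in allcat ls -> val (fL L x) = index x L.
Proof.
move=> /allcat_full [memL _ sz _].
have lt : index x L < #|T| by rewrite -sz index_mem memL.
by rewrite ffunE val_insubd lt.
Qed.

Lemma fL_linext L : L \in allcat ls -> fL L \in linear_extensions Oc.
Proof.
move=> hL; have [memL uL sz io] := allcat_full hL.
rewrite inE; apply/andP; split.
  apply/injectiveP => x y /(congr1 val); rewrite !fL_val //.
  by apply: index_inj; rewrite ?memL.
apply/forallP => u; apply/forallP => v; apply/implyP => /andP[neq conn].
case: (connect_col conn) => [uv|lt]; first by rewrite uv eqxx in neq.
by rewrite !fL_val //; apply: io.
Qed.

Lemma fL_inj : {in allcat ls &, injective fL}.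
Proof.
move=> L1 L2 h1 h2 eqf.
have [m1 u1 _ _] := allcat_full h1.
have [m2 u2 _ _] := allcat_full h2.
apply: uniq_index_eq => //; first by move=> x; rewrite m1 m2.
by move=> x; rewrite -(fL_val x h1) -(fL_val x h2) eqf.
Qed.

Lemma linext_lb : size (allcat ls) <= num_linext Oc.
Proof.
have U : uniq (map fL (allcat ls)) by rewrite map_inj_in_uniq ?allcat_uniq //; exact: fL_inj.
rewrite -(size_map fL) -(card_uniqP U) /num_linext.
apply: subset_leq_card; apply/subsetP => f /mapP [L hL ->].
exact: fL_linext.
Qed.

End Graph.

Lemma size_in_allcat (T : eqType) (ls : seq (seq T)) L :
  L \in allcat ls -> size L = sumn (map size ls).
Proof.
elim: ls L => [|l ls IH] L /=; first by rewrite inE => /eqP ->.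
move=> /allpairsP [[p q] [/= pin qin ->]].
by rewrite size_cat (IH _ qin) (perm_size (etrans (esym (mem_permutations _ _)) pin)) .
Qed.

Lemma classes_nonempty (T : finType) (e : rel T) (k : nat) (c : T -> 'I_k) :
  (forall x y, e x y -> c x != c y) -> (forall j, j < k -> ~ colorable e j) ->
  forall i : 'I_k, exists x, c x = i.
Proof.
move=> proper minc i.
case: (boolP [exists x, c x == i]) => [/existsP [x /eqP h]|]; first by exists x.
rewrite negb_exists => /forallP hn.
exfalso; apply: (minc k.-1); first by have := ltn_ord i; lia.
have lt x : (if c x < i then (c x : nat) else (c x).-1) < k.-1.
  have := hn x; rewrite -val_eqE /= => hx.
  have := ltn_ord (c x); have := ltn_ord i.
  by case: ifP => ?; lia.
exists (fun x => Ordinal (lt x)) => x y exy.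
have := proper _ _ exy; rewrite -!val_eqE /=.
have := hn x; have := hn y; rewrite -!val_eqE /=.
by case: ifP => ?; case: ifP => ?; lia.
Qed.

Lemma main_nat (T : finType) (e : rel T) (k : nat) :
  simple_graph e -> chromatic_number e k ->
  (#|T|)`! <= k`! * k ^ (#|T| - k) * epsilon e.
Proof.
move=> [esym _] [[c proper] minc].
have ne := classes_nonempty proper minc.
set ls := map (cls c) (iota 0 k).
have ul : all uniq ls.
  by apply/allP => l /mapP [i _ ->]; rewrite filter_uniq ?enum_uniq.
have pos : all (fun x => 0 < x) (map size ls).
  apply/allP => z /mapP [l /mapP [i ik ->] ->].
  rewrite mem_iota add0n in ik.
  have [x hx] := ne (Ordinal (proj2 (andP ik))).
  have xin : x \in cls c i by rewrite mem_filter mem_enum hx eqxx.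
  by apply: (leq_ltn_trans (leq0n (index x (cls c i)))); rewrite index_mem.
have szp : 0 < size (allcat ls).
  rewrite size_allcat // big_seq; by apply: prodn_gt0 => l; rewrite fact_gt0.
have [L0 L0in] : exists L0, L0 \in allcat ls.
  by case: (allcat ls) szp => // L0 s _; exists L0; rewrite inE eqxx.
have sumT : sumn (map size ls) = #|T|.
  rewrite -(size_in_allcat L0in).
  by have [_ _ -> _] := allcat_full L0in.
have sizeK : size (map size ls) = k by rewrite !size_map size_iota.
have := multi_bound pos; rewrite sumT sizeK big_map -size_allcat // => H.
apply: (leq_trans H); rewrite leq_mul2l; apply/orP; right.
apply: (leq_trans (linext_lb e c)).
apply: (leq_bigmax_cond (F := fun O => num_linext O)).
exact: Oc_acyclic.
Qed.

Unset Implicit Arguments.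
Local Open Scope ring_scope.

Theorem corollary4p4 (T : finType) (e : rel T) (k : nat) :
  simple_graph e -> chromatic_number e k ->
  ((#|T|)`!%:R / ((k ^ (#|T| - k))%N%:R * (k`!)%:R) <= (epsilon e)%:R :> rat).
Proof.
move=> hs hc; have H := main_nat hs hc.
rewrite -natrM.
case: (posnP (k ^ (#|T| - k) * k`!)%N) => [->|D].
  by rewrite invr0 mulr0 ler0n.
rewrite ler_pdivrMr ?ltr0n // -natrM ler_nat.
move: H; set a := (#|T|)`!; set b := epsilon e; set f := k`!; set g := (k ^ _)%N; lia.
Qed.
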